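(* Let $\Gamma$ be a Hintikka set for $\mathbb{T}_1$. Then there exists $\nu\in\mathcal{F}_{C_1}$ such that $\nu(\varphi)=L$ for every signed formula $\mathsf{L}(\varphi)\in\Gamma$ (where the label $\mathsf{T},\mathsf{t},\mathsf{F}$ corresponds to the value $T,t,F$).
   Context: $\Sigma$ has unary $\neg$ and binary $\wedge,\vee,\to$. $\mathcal{A}_{C_1}$ is the $\Sigma$-multialgebra on $\{F,t,T\}$, $D=\{t,T\}$: $F\tilde\vee F=\{F\}$, $F\tilde\vee T=T\tilde\vee F=T\tilde\vee T=\{T\}$, $x\tilde\vee y=D$ if $t\in\{x,y\}$; $x\tilde\wedge y=\{F\}$ if $F\in\{x,y\}$, $T\tilde\wedge T=\{T\}$, $t\tilde\wedge t=t\tilde\wedge T=T\tilde\wedge t=D$; $\tilde\neg F=\{T\}$, $\tilde\neg t=D$, $\tilde\neg T=\{F\}$; $F\tilde\to F=F\tilde\to T=T\tilde\to T=\{T\}$, $t\tilde\to F=T\tilde\to F=\{F\}$, $x\tilde\to t=D$, $t\tilde\to T=D$. Valuations: maps $\nu$ from formulas to $\{F,t,T\}$ with $\nu(\neg\alpha)\in\tilde\neg\nu(\alpha)$, $\nu(\alpha\#\beta)\in\nu(\alpha)\tilde\#\nu(\beta)$; $\mathcal{F}_{C_1}$ = valuations with $\nu(\alpha)=t\Rightarrow\nu(\alpha\wedge\neg\alpha)=T$. Signed formulas are $\mathsf{L}(\varphi)$ with $\mathsf{L}\in\{\mathsf{T},\mathsf{t},\mathsf{F}\}$. A nonempty set $\Gamma$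 of signed formulas is a Hintikka set for $\mathbb{T}_1$ if: (1) $\mathsf{L}(\varphi),\mathsf{L}'(\varphi)\in\Gamma$ imply $\mathsf{L}=\mathsf{L}'$; (2) no $\mathsf{t}(\varphi\wedge\neg\varphi)$ is in $\Gamma$; (3) $\mathsf{T}(\neg\varphi)\in\Gamma\Rightarrow\mathsf{F}(\varphi)\in\Gamma$ or $\mathsf{t}(\varphi)\in\Gamma$; (4) $\mathsf{t}(\neg\varphi)\in\Gamma\Rightarrow\mathsf{t}(\varphi)\in\Gamma$; (5) $\mathsf{F}(\neg\varphi)\in\Gamma\Rightarrow\mathsf{T}(\varphi)\in\Gamma$; (6) $\mathsf{T}(\varphi\wedge\psi)\in\Gamma\Rightarrow$ $\Gamma$ contains $\mathsf{X}(\varphi)$ and $\mathsf{Y}(\psi)$ for some $\mathsf{X},\mathsf{Y}\in\{\mathsf{T},\mathsf{t}\}$; (7) $\mathsf{t}(\varphi\wedge\psi)\in\Gamma\Rightarrow$ $\Gamma$ contains $\mathsf{T}\varphi,\mathsf{t}\psi$, or $\mathsf{t}\varphi,\mathsf{T}\psi$, or $\mathsf{t}\varphi,\mathsf{t}\psi$; (8) $\mathsf{F}(\varphi\wedge\psi)\in\Gamma\Rightarrow\mathsf{F}(\varphi)\in\Gamma$ or $\mathsf{F}(\psi)\in\Gamma$; (9) $\mathsf{T}(\varphi\vee\psi)\in\Gamma\Rightarrow$ one of $\mathsf{T}\varphi,\mathsf{t}\varphi,\mathsf{T}\psi,\mathsf{t}\psi$ is in $\Gamma$; (10) $\mathsf{t}(\varphi\vee\psi)\in\Gamma\Rightarrow\mathsf{t}(\varphi)\in\Gamma$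 or $\mathsf{t}(\psi)\in\Gamma$; (11) $\mathsf{F}(\varphi\vee\psi)\in\Gamma\Rightarrow\mathsf{F}(\varphi),\mathsf{F}(\psi)\in\Gamma$; (12) $\mathsf{T}(\varphi\to\psi)\in\Gamma\Rightarrow$ one of $\mathsf{F}\varphi,\mathsf{T}\psi,\mathsf{t}\psi$ is in $\Gamma$; (13) $\mathsf{t}(\varphi\to\psi)\in\Gamma\Rightarrow$ either $\mathsf{t}\varphi,\mathsf{T}\psi\in\Gamma$ or $\mathsf{t}\psi\in\Gamma$; (14) $\mathsf{F}(\varphi\to\psi)\in\Gamma\Rightarrow$ either $\mathsf{T}\varphi,\mathsf{F}\psi\in\Gamma$ or $\mathsf{t}\varphi,\mathsf{F}\psi\in\Gamma$. *)

(* Defs.v *)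
Inductive formula : Type :=
  | Var : nat -> formula
  | Neg : formula -> formula
  | And : formula -> formula -> formula
  | Or  : formula -> formula -> formula
  | Imp : formula -> formula -> formula.

Inductive val3 : Type := vF | vt | vT.

Definition designated (x : val3) : Prop := x = vt \/ x = vT.

(* Multioperations of A_{C1}, as membership relations: y \in op x1 x2. *)
Definition mneg (x y : val3) : Prop :=
  match x with
  | vF => y = vT
  | vt => designated y
  | vT => y = vF
  end.

Definition mor (x1 x2 y : val3) : Prop :=
  match x1, x2 with
  | vt, _ | _, vt => designated y
  | vF, vF => y = vF
  | _, _ => y = vT
  end.

Definition mand (x1 x2 y : val3) : Prop :=
  match x1, x2 with
  | vF, _ | _, vF => y = vF
  | vT, vT => y = vT
  | _, _ => designated y
  end.

Definition mimp (x1 x2 y : val3) : Prop :=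
  match x1, x2 with
  | _, vt => designated y
  | vF, vF => y = vT
  | vF, vT => y = vT
  | vT, vT => y = vT
  | vt, vF => y = vF
  | vT, vF => y = vF
  | vt, vT => designated y
  end.

Definition valuation (nu : formula -> val3) : Prop :=
  forall a b : formula,
    mneg (nu a) (nu (Neg a)) /\
    mand (nu a) (nu b) (nu (And a b)) /\
    mor  (nu a) (nu b) (nu (Or a b)) /\
    mimp (nu a) (nu b) (nu (Imp a b)).

Definition F_C1 (nu : formula -> val3) : Prop :=
  valuation nu /\
  (forall a : formula, nu a = vt -> nu (And a (Neg a)) = vT).

Inductive label : Type := LT | Lt | LF.

Definition signed := (label * formula)%type.

Definition label_val (L : label) : val3 :=
  match L with LT => vT | Lt => vt | LF => vF end.

(* Hintikka sets for T_1, following conditions (1)-(14). *)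
Definition Hintikka (G : signed -> Prop) : Prop :=
  (exists s, G s) /\
  (forall L L' p, G (L, p) -> G (L', p) -> L = L') /\
  (forall p, ~ G (Lt, And p (Neg p))) /\
  (forall p, G (LT, Neg p) -> G (LF, p) \/ G (Lt, p)) /\
  (forall p, G (Lt, Neg p) -> G (Lt, p)) /\
  (forall p, G (LF, Neg p) -> G (LT, p)) /\
  (forall p q, G (LT, And p q) ->
               exists X Y, (X = LT \/ X = Lt) /\ (Y = LT \/ Y = Lt) /\
                           G (X, p) /\ G (Y, q)) /\
  (forall p q, G (Lt, And p q) ->
               (G (LT, p) /\ G (Lt, q)) \/ (G (Lt, p) /\ G (LT, q)) \/
               (G (Lt, p) /\ G (Lt, q))) /\
  (forall p q, G (LF, And p q) -> G (LF, p) \/ G (LF, q)) /\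
  (forall p q, G (LT, Or p q) ->
               G (LT, p) \/ G (Lt, p) \/ G (LT, q) \/ G (Lt, q)) /\
  (forall p q, G (Lt, Or p q) -> G (Lt, p) \/ G (Lt, q)) /\
  (forall p q, G (LF, Or p q) -> G (LF, p) /\ G (LF, q)) /\
  (forall p q, G (LT, Imp p q) ->
               G (LF, p) \/ G (LT, q) \/ G (Lt, q)) /\
  (forall p q, G (Lt, Imp p q) ->
               (G (Lt, p) /\ G (LT, q)) \/ G (Lt, q)) /\
  (forall p q, G (LF, Imp p q) ->
               (G (LT, p) /\ G (LF, q)) \/ (G (Lt, p) /\ G (LF, q))).

(* Main.v *)
Require Import Defs.
From Stdlib Require Import Classical ClassicalEpsilon.

Definition dneg x := match x with vT => vF | _ => vT end.
Definition dand x y := match x, y with vF, _ | _, vF => vF | _, _ => vT end.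
Definition dor x y := match x, y with vF, vF => vF | _, _ => vT end.
Definition dimp x y := match x, y with _, vt => vT | vt, vF | vT, vF => vF | _, _ => vT end.

Ltac fin := simpl; unfold designated; auto.
Section S.
Variable G : signed -> Prop.

Definition lab (p : formula) : option label :=
  match excluded_middle_informative (exists L, G (L, p)) with
  | left h => Some (proj1_sig (constructive_indefinite_description _ h))
  | right _ => None
  end.

Lemma lab_some p L : lab p = Some L -> G (L, p).
Proof.
  unfold lab. destruct excluded_middle_informative as [h|h]; intro E; [|discriminate].
  injection E as <-. exact (proj2_sig (constructive_indefinite_description _ h)).
Qed.

Lemma lab_none p L : lab p = None -> ~ G (L, p).
Proof.
  unfold lab. destruct excluded_middle_informative as [h|h]; intro E; [discriminate|].
  intro g; apply h; eauto.
Qed.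

Fixpoint nu (p : formula) : val3 :=
  match lab p with
  | Some L => label_val L
  | None =>
    match p with
    | Var _ => vF
    | Neg a => dneg (nu a)
    | And a b => dand (nu a) (nu b)
    | Or a b => dor (nu a) (nu b)
    | Imp a b => dimp (nu a) (nu b)
    end
  end.

Lemma nu_eq p : nu p = match lab p with
  | Some L => label_val L
  | None =>
    match p with
    | Var _ => vF
    | Neg a => dneg (nu a)
    | And a b => dand (nu a) (nu b)
    | Or a b => dor (nu a) (nu b)
    | Imp a b => dimp (nu a) (nu b)
    end
  end.
Proof. destruct p; reflexivity. Qed.

Hypothesis H : Hintikka G.

Lemma key L p : G (L, p) -> nu p = label_val L.
Proof.
  intro g. rewrite nu_eq. destruct (lab p) eqn:E.
  - apply lab_some in E. destruct H as [_ [H1 _]]. rewrite (H1 _ _ _ E g). reflexivity.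
  - exfalso; exact (lab_none _ L E g).
Qed.

End S.

Theorem mainTheorem16 (G : signed -> Prop) :
  Hintikka G ->
  exists nu : formula -> val3,
    F_C1 nu /\ (forall (L : label) (p : formula), G (L, p) -> nu p = label_val L).
Proof.
  intro H. exists (nu G).
  pose proof (key G H) as K.
  destruct H as (_ & H1 & H2 & H3 & H4 & H5 & H6 & H7 & H8 & H9 & H10 & H11 & H12 & H13 & H14).
  assert (V : valuation (nu G)).
  { intros a b. unfold designated in *. repeat split.
    - rewrite (nu_eq G (Neg a)). destruct (lab G (Neg a)) eqn:E.
      + apply lab_some in E. destruct l; simpl.
        * destruct (H3 _ E) as [g|g]; rewrite (K _ _ g); fin.
        * rewrite (K _ _ (H4 _ E)); fin.
        * rewrite (K _ _ (H5 _ E)); fin.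
      + destruct (nu G a); fin.
    - rewrite (nu_eq G (And a b)). destruct (lab G (And a b)) eqn:E.
      + apply lab_some in E. destruct l; simpl.
        * destruct (H6 _ _ E) as (X & Y & [->| ->] & [->| ->] & g1 & g2);
            rewrite (K _ _ g1), (K _ _ g2); fin.
        * destruct (H7 _ _ E) as [[g1 g2]|[[g1 g2]|[g1 g2]]];
            rewrite (K _ _ g1), (K _ _ g2); fin.
        * destruct (H8 _ _ E) as [g|g]; rewrite (K _ _ g); simpl;
            [destruct (nu G b)|destruct (nu G a)]; fin.
      + destruct (nu G a), (nu G b); fin.
    - rewrite (nu_eq G (Or a b)). destruct (lab G (Or a b)) eqn:E.
      + apply lab_some in E. destruct l; simpl.
        * destruct (H9 _ _ E) as [g|[g|[g|g]]]; rewrite (K _ _ g); simpl;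
            [destruct (nu G b)|destruct (nu G b)|destruct (nu G a)|destruct (nu G a)];
            fin.
        * destruct (H10 _ _ E) as [g|g]; rewrite (K _ _ g); simpl;
            [destruct (nu G b)|destruct (nu G a)]; fin.
        * destruct (H11 _ _ E) as [g1 g2]; rewrite (K _ _ g1), (K _ _ g2); fin.
      + destruct (nu G a), (nu G b); fin.
    - rewrite (nu_eq G (Imp a b)). destruct (lab G (Imp a b)) eqn:E.
      + apply lab_some in E. destruct l; simpl.
        * destruct (H12 _ _ E) as [g|[g|g]]; rewrite (K _ _ g); simpl;
            [destruct (nu G b)|destruct (nu G a)|destruct (nu G a)]; fin.
        * destruct (H13 _ _ E) as [[g1 g2]|g]; [rewrite (K _ _ g1), (K _ _ g2)|rewrite (K _ _ g)];
            fin; destruct (nu G a); fin.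
        * destruct (H14 _ _ E) as [[g1 g2]|[g1 g2]]; rewrite (K _ _ g1), (K _ _ g2); fin.
      + destruct (nu G a), (nu G b); fin. }
  split; [split; [exact V|] | exact K].
  intros a Ha. rewrite (nu_eq G (And a (Neg a))). destruct (lab G (And a (Neg a))) eqn:E.
  - apply lab_some in E. destruct l; fin.
    + exfalso; exact (H2 _ E).
    + destruct (H8 _ _ E) as [g|g].
      * rewrite (K _ _ g) in Ha; discriminate.
      * rewrite (K _ _ (H5 _ g)) in Ha; discriminate.
  - rewrite Ha. destruct (V a a) as [Vn _]. rewrite Ha in Vn. unfold mneg, designated in Vn.
    destruct Vn as [E2 | E2]; rewrite E2; reflexivity.
Qed.
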